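(* Normalize $\operatorname{var}(X)=1$ and $\operatorname{var}(W_1)=I_{d_1}$, suppose $\operatorname{var}(Y,X,W_1)$ is positive definite, and let $\|c\|<1$. Then $\mathcal B(r_X,0,c)=\{\beta_{\text{med}}\}$ if and only if there exists $p_1\in\mathbb R^{d_1}$ with $(I+cr_X')p_1=\sigma_{W_1,X}$ and $(p_1'r_X)^2(1-\|c\|^2)<k_0$. In particular, $\mathcal B(r_X,0,c)=\{\beta_{\text{med}}\}$ whenever $r_X'c\ne-1$ and $z_X(r_X,c)^2<k_0$.
   Context: For random vectors $A,B$ with $\operatorname{var}(B)$ invertible, $A^{\perp B}=A-\operatorname{cov}(A,B)\operatorname{var}(B)^{-1}B$. $\sigma_{A,B}=\operatorname{cov}(A,B)$. $\beta_{\text{med}}$ is the coefficient on $X$ in the linear projection of $Y$ on $(1,X,W_1)$. $k_0=\operatorname{var}(X^{\perp W_1})$; $z_X(r_X,c)=\frac{r_X'\sigma_{W_1,X}\sqrt{1-\|c\|^2}}{1+r_X'c}$. For $r_X,r_Y,c\in\mathbb R^{d_1}$, $\mathcal B(r_X,r_Y,c)$ is the set of $b\in\mathbb R$ such that for some $(p_1,g_1)\in\mathbb R^{d_1}\times\mathbb R^{d_1}$ (with $\Sigma_{\text{obs}}=\operatorname{var}(W_1)$): $\operatorname{cov}(Y,X)=b\operatorname{var}(X)+g_1'(\Sigma_{\text{obs}}+cr_X'+r_Yc'+r_Yr_X')p_1$; $\operatorname{cov}(Y,W_1)=b\operatorname{cov}(X,W_1)+g_1'(\Sigma_{\text{obs}}+r_Yc')$;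 $\operatorname{cov}(X,W_1)=p_1'(\Sigma_{\text{obs}}+r_Xc')$; $\operatorname{var}(Y)>b^2\operatorname{var}(X)+g_1'(\Sigma_{\text{obs}}+r_Yr_Y'+2r_Yc')g_1+2bg_1'(\Sigma_{\text{obs}}+cr_X'+r_Yc'+r_Yr_X')p_1$; $\operatorname{var}(X)>p_1'(\Sigma_{\text{obs}}+2r_Xc'+r_Xr_X')p_1$; $1>c'\Sigma_{\text{obs}}^{-1}c$. *)

(* Defs.v *)
(* Second-moment data of (Y, X, W_1) represented by its
   covariance entries. *)
From mathcomp Require Import all_boot all_order all_algebra.
Set Implicit Arguments. Unset Strict Implicit. Unset Printing Implicit Defensive.
Import Order.TTheory GRing.Theory Num.Theory.
Local Open Scope ring_scope.

Definition sc {R : pzRingType} (M : 'M[R]_1) : R := M ord0 ord0.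

Definition vnorm {R : rcfType} {d : nat} (v : 'cV[R]_d) : R :=
  Num.sqrt (sc (v^T *m v)).

Definition posdef {R : numDomainType} {n : nat} (M : 'M[R]_n) : Prop :=
  forall v : 'cV[R]_n, v != 0 -> 0 < sc (v^T *m M *m v).

(* var(Y, X, W_1) in the order (Y, X, W_1), built from
   varY = var(Y), sYX = cov(Y,X), varX = var(X),
   sYW = cov(Y,W_1) (a 1 x d row), sXW = cov(X,W_1) (a 1 x d row),
   Sig = var(W_1). *)
Definition covmat {R : pzRingType} {d : nat} (varY sYX varX : R)
  (sYW sXW : 'rV[R]_d) (Sig : 'M[R]_d) : 'M[R]_(2 + d) :=
  block_mx (\matrix_(i < 2, j < 2)
             (if (val i == 0%N) && (val j == 0%N) then varY
              else if (val i == 1%N) && (val j == 1%N) then varX else sYX))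
           (col_mx sYW sXW) (row_mx sYW^T sXW^T) Sig.

Definition inB {R : realFieldType} {d : nat} (varY sYX varX : R)
  (sYW sXW : 'rV[R]_d) (Sig : 'M[R]_d) (rX rY c : 'cV[R]_d) (b : R) : Prop :=
  exists p1 g1 : 'cV[R]_d,
  [/\ sYX = b * varX
            + sc (g1^T *m (Sig + c *m rX^T + rY *m c^T + rY *m rX^T) *m p1),
      sYW = b *: sXW + g1^T *m (Sig + rY *m c^T),
      sXW = p1^T *m (Sig + rX *m c^T) /\
      (b ^+ 2 * varX
        + sc (g1^T *m (Sig + rY *m rY^T + 2%:R *: (rY *m c^T)) *m g1)
        + 2%:R * b * sc (g1^T *m (Sig + c *m rX^T + rY *m c^T + rY *m rX^T) *m p1)
        < varY),
      (sc (p1^T *m (Sig + 2%:R *: (rX *m c^T) + rX *m rX^T) *m p1) < varX) &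
      (sc (c^T *m invmx Sig *m c) < 1)].

(* k_0 = var(X^{perp W_1}) *)
Definition k0 {R : realFieldType} {d : nat} (varX : R) (sXW : 'rV[R]_d)
  (Sig : 'M[R]_d) : R :=
  varX - sc (sXW *m invmx Sig *m sXW^T).

(* beta_med = cov(Y, X^{perp W_1}) / var(X^{perp W_1}), the coefficient on X
   in the linear projection of Y on (1, X, W_1) *)
Definition beta_med {R : realFieldType} {d : nat} (sYX varX : R)
  (sYW sXW : 'rV[R]_d) (Sig : 'M[R]_d) : R :=
  (sYX - sc (sYW *m invmx Sig *m sXW^T)) / k0 varX sXW Sig.

Definition zX {R : rcfType} {d : nat} (sXW : 'rV[R]_d) (rX c : 'cV[R]_d) : R :=
  sc (rX^T *m sXW^T) * Num.sqrt (1 - vnorm c ^+ 2) / (1 + sc (rX^T *m c)).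

(* Main.v *)
Require Import Defs.
From mathcomp Require Import all_boot all_order all_algebra.
From mathcomp Require Import ring lra.
Import Order.TTheory GRing.Theory Num.Theory.
Local Open Scope ring_scope.

Section S.
Context {R : rcfType}.

Lemma scD (A B : 'M[R]_1) : sc (A + B) = sc A + sc B.
Proof. by rewrite /sc mxE. Qed.
Lemma scN (A : 'M[R]_1) : sc (- A) = - sc A.
Proof. by rewrite /sc mxE. Qed.
Lemma scB (A B : 'M[R]_1) : sc (A - B) = sc A - sc B.
Proof. by rewrite scD scN. Qed.
Lemma scZ (a : R) (A : 'M[R]_1) : sc (a *: A) = a * sc A.
Proof. by rewrite /sc mxE. Qed.
Lemma scT (A : 'M[R]_1) : sc (A^T) = sc A.
Proof. by rewrite /sc mxE. Qed.
Lemma sc0 : sc (0 : 'M[R]_1) = 0.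
Proof. by rewrite /sc mxE. Qed.
Lemma scS (a : R) : sc (a%:M : 'M[R]_1) = a.
Proof. by rewrite /sc mxE. Qed.
Lemma scM (A B : 'M[R]_1) : sc (A *m B) = sc A * sc B.
Proof. by rewrite /sc mxE big_ord1. Qed.
Lemma sc_sym n (A : 'M[R]_(1,n)) (B : 'M[R]_(n,1)) : sc (A *m B) = sc (B^T *m A^T).
Proof. by rewrite -trmx_mul scT. Qed.
Lemma mulmx11 n (A : 'M[R]_(n,1)) (B : 'M[R]_1) : A *m B = sc B *: A.
Proof. by rewrite {1}(mx11_scalar B) mul_mx_scalar. Qed.

Lemma quadG n d (A : 'M[R]_n) (B : 'M_(n,d)) C Sig v w :
  sc ((col_mx v w)^T *m block_mx A B C Sig *m col_mx v w) =
  sc (v^T *m A *m v) + sc (v^T *m B *m w) + sc (w^T *m C *m v) + sc (w^T *m Sig *m w).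
Proof.
rewrite tr_col_mx mul_row_block mul_row_col !mulmxDl !scD. ring.
Qed.

Lemma quad d (varY sYX varX : R) (sYW sXW : 'rV[R]_d) (Sig : 'M[R]_d) x y (w : 'cV[R]_d) :
  sc ((col_mx (col_mx (x%:M : 'M_1) (y%:M : 'M_1)) w)^T *m covmat varY sYX varX sYW sXW Sig
      *m (col_mx (col_mx (x%:M : 'M_1) (y%:M : 'M_1)) w)) =
  x^+2 * varY + 2 * x * y * sYX + y^+2 * varX + 2 * x * sc (sYW *m w)
   + 2 * y * sc (sXW *m w) + sc (w^T *m Sig *m w).
Proof.
have -> : covmat varY sYX varX sYW sXW Sig =
  block_mx (block_mx (varY%:M : 'M_1) sYX%:M sYX%:M varX%:M) (col_mx sYW sXW)
           (row_mx sYW^T sXW^T) Sig.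
  congr block_mx; apply/matrixP => i j.
  case: i => [[|[|i]] Hi] //; case: j => [[|[|j]] Hj] //; rewrite !mxE /=.
  all: try (rewrite /split; case: ltnP => //= H; rewrite !mxE //=).
  all: try (rewrite /split; case: ltnP => //= H'; rewrite !mxE //=).
etransitivity. exact: (@quadG (1+1) _ _ _ _ _ _ _).
rewrite tr_col_mx !tr_scalar_mx mul_row_block !mul_row_col !mul_scalar_mx.
rewrite !scD !mulmxDl !scD.
rewrite -mulmxA mul_row_col !mul_mx_scalar mulmxDr -!scalemxAr !scD !scZ.
rewrite ?mul_mx_scalar -?scalemxAl ?scZ ?scS.
rewrite (sc_sym _ w^T) (sc_sym _ w^T) !trmxK.
ring.
Qed.

Lemma nzv d x y (w : 'cV[R]_d) : (x != 0) || (y != 0) ->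
  col_mx (col_mx (x%:M : 'M_1) (y%:M : 'M_1)) w != 0.
Proof.
move=> hxy; apply/eqP => /matrixP H.
have Hx := H (lshift d (lshift 1 ord0)) ord0.
have Hy := H (lshift d (rshift 1 ord0)) ord0.
rewrite !col_mxEu !mxE /= in Hx; rewrite col_mxEu col_mxEd !mxE /= in Hy.
by move: Hx Hy hxy; rewrite !mulr1n => -> ->; rewrite eqxx.
Qed.

Lemma sc_sq_ge0 d (c : 'cV[R]_d) : 0 <= sc (c^T *m c).
Proof.
rewrite /sc mxE; apply: sumr_ge0 => i _; rewrite mxE -expr2; exact: sqr_ge0.
Qed.

Lemma vnorm2 d (c : 'cV[R]_d) : vnorm c ^+ 2 = sc (c^T *m c).
Proof. by rewrite /vnorm sqr_sqrtr // sc_sq_ge0. Qed.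

Lemma inB_char d (varY sYX : R) (sYW sXW : 'rV[R]_d) (rX c : 'cV[R]_d) b :
  1 - sc (sXW *m sXW^T) != 0 ->
  beta_med sYX 1 sYW sXW 1%:M ^+ 2 * (1 - sc (sXW *m sXW^T)) + sc (sYW *m sYW^T) < varY ->
  sc (c^T *m c) < 1 ->
  inB varY sYX 1 sYW sXW 1%:M rX 0 c b <->
  b = beta_med sYX 1 sYW sXW 1%:M /\
  exists p1 : 'cV[R]_d, ((1%:M : 'M_d) + c *m rX^T) *m p1 = sXW^T /\
     sc (p1^T *m (1%:M + 2%:R *: (rX *m c^T) + rX *m rX^T) *m p1) < 1.
Proof.
move=> Hk HY Hc.
have hbm : beta_med sYX 1 sYW sXW 1%:M =
   (sYX - sc (sYW *m sXW^T)) / (1 - sc (sXW *m sXW^T)).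
  by rewrite /beta_med /k0 invmx1 !mulmx1.
have Hsym : sc (sXW *m sYW^T) = sc (sYW *m sXW^T).
  by rewrite sc_sym trmxK.
split.
  case=> p1 [g1 [E1 E2 [E3 E4] E5 E6]].
  move: E1 E2 E3 E4 E5; rewrite !mul0mx !addr0 !mulmx1 => E1 E2 E3 E4 E5.
  have Hg : g1^T = sYW - b *: sXW by rewrite E2 [b *: sXW + _]addrC addrK.
  have Hs : (1%:M + c *m rX^T) *m p1 = sXW^T.
    by rewrite E3 trmx_mul trmxK linearD /= tr_scalar_mx trmx_mul trmxK.
  split; last by exists p1.
  move: E1; rewrite -mulmxA Hs Hg mulmxBl -scalemxAl scB scZ hbm => ->.
  by field.
move=> [Hb [p1 [Hs H5]]].
exists p1, (sYW - b *: sXW)^T; rewrite trmxK.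
have Hs' : sXW = p1^T *m (1%:M + rX *m c^T).
  apply: trmx_inj; rewrite -Hs trmx_mul trmxK linearD /= tr_scalar_mx trmx_mul trmxK //.
rewrite !mul0mx !addr0 !mulmx1 ?trmx0 ?mul0mx ?scaler0 ?addr0 ?mulmx1 invmx1 mulmx1.
rewrite -mulmxA Hs.
have E : sc ((sYW - b *: sXW) *m sXW^T) = sc (sYW *m sXW^T) - b * sc (sXW *m sXW^T).
  by rewrite mulmxBl -scalemxAl scB scZ.
rewrite E; split => //.
- rewrite Hb hbm; field => //.
- by rewrite addrC subrK.
- split => //.
  have hT : (sYW - b *: sXW)^T = sYW^T - b *: sXW^T by apply/matrixP => i j; rewrite !mxE.
  rewrite hT mulmxBr !mulmxBl -!scalemxAr -!scalemxAl !scB !scZ Hsym.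
  move: HY; rewrite -Hb. nra.
Qed.

Lemma ident d (sXW : 'rV[R]_d) (rX c p1 : 'cV[R]_d) :
  ((1%:M : 'M_d) + c *m rX^T) *m p1 = sXW^T ->
  sc (p1^T *m (1%:M + 2%:R *: (rX *m c^T) + rX *m rX^T) *m p1) =
  sc (sXW *m sXW^T) + sc (p1^T *m rX) ^+ 2 * (1 - sc (c^T *m c)).
Proof.
move=> Hs; rewrite -{1}(trmxK sXW) -Hs mulmxDl mul1mx.
rewrite -(mulmxA c) (mulmx11 _ c).
have hT : (p1 + sc (rX^T *m p1) *: c)^T = p1^T + sc (rX^T *m p1) *: c^T.
  by apply/matrixP => i j; rewrite !mxE.
rewrite hT !mulmxDl !mulmxDr mulmx1 -!scalemxAl -!scalemxAr !scD !scZ.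
rewrite !mulmxDl -!scalemxAl !scD !scZ !mulmxA -(mulmxA _ c^T) -(mulmxA _ rX^T) !scM.
rewrite (sc_sym _ rX^T) (sc_sym _ c^T) !trmxK.
ring.
Qed.
End S.

Theorem mainTheorem20 (R : rcfType) (d1 : nat) (varY sYX : R)
  (sYW sXW : 'rV_d1) (rX c : 'cV_d1) :
  (* normalization var(X) = 1, var(W_1) = I; var(Y,X,W_1) positive definite *)
  posdef (covmat varY sYX 1 sYW sXW 1%:M) ->
  vnorm c < 1 ->
  ((forall b : R, inB varY sYX 1 sYW sXW 1%:M rX 0 c b
                  <-> b = beta_med sYX 1 sYW sXW 1%:M)
   <-> exists p1 : 'cV_d1,
         (1%:M + c *m rX^T) *m p1 = sXW^T
         /\ (sc (p1^T *m rX)) ^+ 2 * (1 - vnorm c ^+ 2) < k0 1 sXW 1%:M)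
  /\
  (sc (rX^T *m c) != -1 ->
   zX sXW rX c ^+ 2 < k0 1 sXW 1%:M ->
   forall b : R, inB varY sYX 1 sYW sXW 1%:M rX 0 c b
                 <-> b = beta_med sYX 1 sYW sXW 1%:M).
Proof.
move=> Hpd Hvn.
have Hq := vnorm2 _ c.
have Hc : sc (c^T *m c) < 1.
  rewrite -Hq; have := sqrtr_ge0 (sc (c^T *m c)); rewrite -/(vnorm c); nra.
have hk0 : k0 1 sXW 1%:M = 1 - sc (sXW *m sXW^T) by rewrite /k0 invmx1 mulmx1.
have Hk : 0 < 1 - sc (sXW *m sXW^T).
  have h : 0 < sc ((col_mx (col_mx (0%:M : 'M_1) (1%:M : 'M_1)) (- sXW^T))^T
      *m covmat varY sYX 1 sYW sXW 1%:M
      *m (col_mx (col_mx (0%:M : 'M_1) (1%:M : 'M_1)) (- sXW^T))).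
    by apply: Hpd; apply: nzv; rewrite oner_eq0 orbT.
  rewrite quad mulmx1 in h.
  have hT : (- sXW^T)^T = - sXW by apply/matrixP => i j; rewrite !mxE.
  rewrite hT !mulmxN !mulNmx ?opprK !scN in h.
  move: h; rewrite !mulr0 !mul0r; nra.

have Hk' : 1 - sc (sXW *m sXW^T) != 0 by rewrite gt_eqF.
set bm := beta_med sYX 1 sYW sXW 1%:M.
have HY : bm ^+ 2 * (1 - sc (sXW *m sXW^T)) + sc (sYW *m sYW^T) < varY.
  have Hbm : sYX = bm * (1 - sc (sXW *m sXW^T)) + sc (sYW *m sXW^T).
    by rewrite /bm /beta_med hk0 invmx1 mulmx1; field.
  have h : 0 < sc ((col_mx (col_mx (1%:M : 'M_1) ((- bm)%:M : 'M_1)) (- (sYW - bm *: sXW)^T))^T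
      *m covmat varY sYX 1 sYW sXW 1%:M
      *m (col_mx (col_mx (1%:M : 'M_1) ((- bm)%:M : 'M_1)) (- (sYW - bm *: sXW)^T))).
    by apply: Hpd; apply: nzv; rewrite oner_eq0.
  rewrite quad mulmx1 in h.
  have hT : (- (sYW - bm *: sXW)^T)^T = - (sYW - bm *: sXW) by apply/matrixP => i j; rewrite !mxE.
  have hT2 : (sYW - bm *: sXW)^T = sYW^T - bm *: sXW^T by apply/matrixP => i j; rewrite !mxE.
  have Hsym : sc (sXW *m sYW^T) = sc (sYW *m sXW^T) by rewrite sc_sym trmxK.
  rewrite hT !mulmxN !mulNmx ?opprK hT2 !mulmxBr !mulmxBl -!scalemxAr -!scalemxAl !scN !scB !scZ Hsym in h.
  move: h; rewrite Hbm; nra.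
have P1 : (exists p1 : 'cV_d1, (1%:M + c *m rX^T) *m p1 = sXW^T
         /\ (sc (p1^T *m rX)) ^+ 2 * (1 - vnorm c ^+ 2) < k0 1 sXW 1%:M) ->
    forall b, inB varY sYX 1 sYW sXW 1%:M rX 0 c b <-> b = bm.
  move=> [p1 [Hs Hl]] b; rewrite inB_char //; split; first by case.
  move=> ->; split => //; exists p1; split => //.
  rewrite (ident _ _ _ _ _ Hs); rewrite hk0 Hq in Hl; lra.
split.
  split => //.
  move=> H.
  have [_ [p1 [Hs H5]]] := (inB_char _ varY sYX sYW sXW rX c bm Hk' HY Hc).1 ((H bm).2 erefl).
  exists p1; split => //.
  rewrite hk0 Hq; rewrite (ident _ _ _ _ _ Hs) in H5; lra.
move=> Hne Hz; apply: P1.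
set t := sc (rX^T *m sXW^T); set e := sc (rX^T *m c).
have He : 1 + e != 0.
  apply: contra Hne; rewrite addrC addr_eq0; by [].
exists (sXW^T - (t / (1 + e)) *: c).
have Ha : sc (rX^T *m (sXW^T - (t / (1 + e)) *: c)) = t / (1 + e).
  rewrite mulmxBr -scalemxAr scB scZ -/t -/e; field => //.
split.
  rewrite mulmxDl mul1mx -mulmxA (mulmx11 _ c) Ha; exact: subrK.
rewrite sc_sym trmxK Ha.
move: Hz; rewrite /zX -/t -/e.
have hu : Num.sqrt (1 - vnorm c ^+ 2) ^+ 2 = 1 - vnorm c ^+ 2.
  by rewrite sqr_sqrtr // Hq subr_ge0 ltW.
suff -> : (t * Num.sqrt (1 - vnorm c ^+ 2) / (1 + e)) ^+ 2 = (t / (1 + e)) ^+ 2 * (1 - vnorm c ^+ 2) by [].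
rewrite -[X in _ = _ * X]hu; field => //.
Qed.
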